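(* Let $p>0$ and let $(u_n)_{n\ge0}$ be a sequence in $E^1$ with partial sums $s_n=\sum_{k=0}^n u_k$. If the series $\sum u_n$ is $E_p$ summable to $\nu\in E^1$ and $\sqrt{n}\,D(u_n,\overline{0})\to0$ as $n\to\infty$, then $\sum u_n=\nu$, i.e. $D(s_n,\nu)\to0$.
   Context: $E^1$ denotes the set of fuzzy numbers: functions $u:\mathbb{R}\to[0,1]$ that are normal, fuzzy convex, upper semicontinuous, and have compact support $\overline{\{t:u(t)>0\}}$. For $\alpha\in(0,1]$ the $\alpha$-level set is $[u]_\alpha=\{t:u(t)\ge\alpha\}$ and $[u]_0=\overline{\{t:u(t)>0\}}$; each is a compact interval $[u^-_\alpha,u^+_\alpha]$. Addition and scalar multiplication are defined levelwise: $[u+v]_\alpha=[u^-_\alpha+v^-_\alpha,u^+_\alpha+v^+_\alpha]$ and $[ku]_\alpha=k[u]_\alpha$ for $k\in\mathbb{R}$. The metric is $D(u,v)=\sup_{\alpha\in[0,1]}\max\{|u^-_\alpha-v^-_\alpha|,|u^+_\alpha-v^+_\alpha|\}$. $\overline{0}$ is the fuzzy number equal to $1$ at $0$ and $0$ elsewhere. A series $\sum u_n$ of fuzzy numbers is $E_p$ summable to $\nu$ if its sequence of partial sums $(s_n)$ has Euler means $\frac{1}{(p+1)^n}\sum_{k=0}^n\binom{n}{k}p^{n-k}s_k$ converging to $\nu$ in $D$. *)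

(* Defs.v *)
From HB Require Import structures.
From mathcomp Require Import all_boot all_order all_algebra.
From mathcomp Require Import all_classical all_reals all_analysis.
Set Implicit Arguments. Unset Strict Implicit. Unset Printing Implicit Defensive.
Import Order.TTheory GRing.Theory Num.Theory.
Import numFieldNormedType.Exports.
Local Open Scope classical_set_scope.
Local Open Scope ring_scope.

Section Fuzzy.
Variable R : realType.

Definition is_fuzzy (u : R -> R) : Prop :=
  [/\ (forall t, 0 <= u t <= 1),
      (exists t, u t = 1),
      (forall x y l, 0 <= l <= 1 -> Num.min (u x) (u y) <= u (l * x + (1 - l) * y)),
      (forall t e, 0 < e -> \forall s \near t, u s < u t + e)
    &
      compact (closure [set t | 0 < u t])].

Definition level (u : R -> R) (a : R) : set R :=
  if a == 0 then closure [set t | 0 < u t] else [set t | a <= u t].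

Definition lo (u : R -> R) (a : R) : R := inf (level u a).
Definition hi (u : R -> R) (a : R) : R := sup (level u a).

Definition fdist (u v : R -> R) : R :=
  sup [set x | exists a, 0 <= a <= 1 /\
       x = Num.max `|lo u a - lo v a| `|hi u a - hi v a|].

(* The fuzzy set whose alpha-cuts (alpha in (0,1]) are the intervals [L a, U a] *)
Definition from_levels (L U : R -> R) : R -> R :=
  fun t => sup ([set 0] `|` [set a | 0 < a <= 1 /\ L a <= t <= U a]).

Definition fadd (u v : R -> R) : R -> R :=
  from_levels (fun a => lo u a + lo v a) (fun a => hi u a + hi v a).
Definition fscale (k : R) (u : R -> R) : R -> R :=
  from_levels (fun a => Num.min (k * lo u a) (k * hi u a))
              (fun a => Num.max (k * lo u a) (k * hi u a)).

Definition fzero : R -> R := fun t => if t == 0 then 1 else 0.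

Fixpoint fsum (F : nat -> R -> R) (n : nat) : R -> R :=
  match n with
  | 0 => F 0%N
  | m.+1 => fadd (fsum F m) (F m.+1)
  end.

Definition partial_sum (u : nat -> R -> R) (n : nat) : R -> R := fsum u n.

Definition euler_mean (p : R) (u : nat -> R -> R) (n : nat) : R -> R :=
  fscale (((p + 1) ^+ n)^-1)
    (fsum (fun k => fscale ('C(n, k)%:R * p ^+ (n - k)) (partial_sum u k)) n).

End Fuzzy.

(* Main.v *)
Require Import Defs.
From HB Require Import structures.
From mathcomp Require Import all_boot all_order all_algebra.
From mathcomp Require Import all_classical all_reals all_analysis.
From mathcomp Require Import ring lra zify.
Import Order.TTheory GRing.Theory Num.Theory.
Import numFieldNormedType.Exports.
Local Open Scope classical_set_scope.
Local Open Scope ring_scope.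
Section Mom.
Variable R : realType.
Variables q r : R.
Hypothesis qr : q + r = 1.
Definition w (n k : nat) : R := 'C(n, k)%:R * q ^+ k * r ^+ (n - k).

Lemma M0 n : \sum_(k < n.+1) w n k = 1.
Proof.
have := exprDn r q n; rewrite addrC qr expr1n => ->.
apply: eq_bigr => i _; rewrite /w -mulr_natl; ring.
Qed.

Lemma shiftM (f : nat -> R) n :
  \sum_(k < n.+2) f k * (k%:R * w n.+1 k) = n.+1%:R * q * \sum_(i < n.+1) f i.+1 * w n i.
Proof.
rewrite big_ord_recl /= mul0r mulr0 add0r big_distrr /=.
apply: eq_bigr => i _; rewrite /w /bump /= add1n subSS.
have H : i.+1%:R * 'C(n.+1,i.+1)%:R = n.+1%:R * 'C(n,i)%:R :> R by rewrite -!natrM -mul_bin_diag.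
rewrite exprS; transitivity (f i.+1 * ((i.+1%:R * 'C(n.+1, i.+1)%:R) * q * q ^+ i * r ^+ (n - i))); first ring.
rewrite H; ring.
Qed.

Lemma M1 n : \sum_(k < n.+1) k%:R * w n k = n%:R * q.
Proof.
case: n => [|n]; first by rewrite big_ord_recl big_ord0 /= mul0r mul0r addr0.
have := shiftM (fun _ => 1) n. under eq_bigr do rewrite mul1r. move=> ->.
under eq_bigr do rewrite mul1r. by rewrite M0 mulr1.
Qed.

Lemma M2 n : \sum_(k < n.+1) k%:R ^+ 2 * w n k = n%:R * q * (n%:R * q + r).
Proof.
case: n => [|n]; first by rewrite big_ord1 /= expr2 !mul0r.
have := shiftM (fun k => k%:R) n. under eq_bigr do rewrite mulrA -expr2. move=> ->.
under eq_bigr do rewrite -natr1 mulrDl mul1r.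
rewrite big_split /= M1 M0. rewrite -natr1. have -> : r = 1 - q by rewrite -qr; ring.
ring.
Qed.

Lemma Mvar n (m : R) : \sum_(k < n.+1) w n k * (k%:R - m) ^+ 2 = (n%:R * q - m) ^+ 2 + n%:R * q * r.
Proof.
have -> : \sum_(k < n.+1) w n k * (k%:R - m) ^+ 2 =
  \sum_(k < n.+1) k%:R ^+ 2 * w n k - 2 * m * \sum_(k < n.+1) k%:R * w n k + m ^+ 2 * \sum_(k < n.+1) w n k.
  rewrite !big_distrr /= -sumrB -big_split /=; apply: eq_bigr => i _; ring.
rewrite M2 M1 M0; ring.
Qed.
End Mom.
Arguments w {R}.
Arguments M0 {R q r}.
Arguments Mvar {R q r}.

Section S.
Variable R : realType.
Definition S (x : nat -> R) k := \sum_(j < k.+1) x j.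

Lemma tele (x G : nat -> R) k m : (k <= m)%N ->
  (forall j, (k <= j)%N -> (j < m)%N -> `|x j.+1| <= G j.+1 - G j) ->
  `|S x m - S x k| <= G m - G k.
Proof.
elim: m => [|m IH] km H.
  by move: km; rewrite leqn0 => /eqP ->; rewrite !subrr normr0.
case: (ltnP m k) => [mk|km'].
  have e : k = m.+1 by apply/eqP; rewrite eqn_leq km mk.
  by rewrite e !subrr normr0.
rewrite /S big_ord_recr /= -/(S x m).
have h1 := IH km' (fun j a b => H j a (ltnW b)).
have h2 := H m km' (ltnSn m).
have -> : S x m + x m.+1 - S x k = (S x m - S x k) + x m.+1 by ring.
apply: le_trans (ler_normD _ _) _.
have -> : G m.+1 - G k = (G m - G k) + (G m.+1 - G m) by ring.
exact: lerD.
Qed.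

Lemma sqrt_step (d : R) (j : nat) K : 0 <= d ->
  Num.sqrt j.+1%:R * d <= K -> d <= 2 * K * Num.sqrt j.+1%:R - 2 * K * Num.sqrt j%:R.
Proof.
move=> d0 hK.
set t := Num.sqrt j.+1%:R; set s := Num.sqrt j%:R.
have t2 : t * t = j%:R + 1 by rewrite /t -expr2 sqr_sqrtr // -natr1.
have s2 : s * s = j%:R by rewrite /s -expr2 sqr_sqrtr.
have s0 : 0 <= s by apply: sqrtr_ge0.
have t0 : 0 <= t by apply: sqrtr_ge0.
have ts : s <= t by rewrite /s /t ler_sqrt // ler_nat.
have h1 : 1 <= 2 * t * (t - s) by nra.
have h2 : d * 1 <= d * (2 * t * (t - s)) by apply: ler_wpM2l.
have h3 : (t * d) * (t - s) <= K * (t - s) by apply: ler_wpM2r; [rewrite subr_ge0|].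
have e1 : d * (2 * t * (t - s)) = 2 * ((t * d) * (t - s)) by ring.
rewrite mulr1 e1 in h2. lra.
Qed.

Lemma pw (x d : nat -> R) (K dl : R) (J m k : nat) :
  0 < dl -> 0 <= K -> (forall j, 0 <= d j) -> (forall j, `|x j| <= d j) ->
  (forall j, Num.sqrt j%:R * d j <= K) -> (forall j, (J <= j)%N -> Num.sqrt j%:R * d j <= dl) ->
  (1 <= m)%N -> (J.*2 <= m)%N ->
  `|S x k - S x m| <= dl + (dl / (2 * m%:R) + 8 * K * Num.sqrt m%:R / m%:R ^+ 2) * (k%:R - m%:R) ^+ 2.
Proof.
move=> dl0 K0 d0 xd hK hJ m1 mJ.
have mpos : 0 < m%:R :> R by rewrite ltr0n.
set c1 := dl / (2 * m%:R). set c2 := 8 * K * Num.sqrt m%:R / m%:R ^+ 2.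
have c10 : 0 <= c1 by rewrite /c1 divr_ge0 // ?mulr_ge0 // ltW.
have c20 : 0 <= c2 by rewrite /c2 divr_ge0 ?mulr_ge0 ?sqrtr_ge0 // ?exprn_ge0 // ltW.
have z0 : 0 <= (k%:R - m%:R : R) ^+ 2 by apply: sqr_ge0.
case: (leqP m k.*2) => hk.
-
  set B := Num.sqrt (2 * dl ^+ 2 / m%:R).
  have B0 : 0 <= B by apply: sqrtr_ge0.
  have BB : m%:R * B ^+ 2 = 2 * dl ^+ 2.
    rewrite /B sqr_sqrtr; last by rewrite divr_ge0 ?mulr_ge0 ?sqr_ge0 // ltW.
    by rewrite mulrC divfK // gt_eqF.
  have dB : forall j, (m <= j.*2)%N -> d j <= B.
    move=> j hj.
    have jJ : (J <= j)%N by rewrite -leq_double (leq_trans mJ hj).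
    have jpos : (0 < j)%N by rewrite -double_gt0 (leq_trans m1 hj).
    have h1 := hJ j jJ.
    have jr : 0 < j%:R :> R by rewrite ltr0n.
    have sj : Num.sqrt j%:R ^+ 2 = j%:R :> R by rewrite sqr_sqrtr // ltW.
    have sj0 : 0 <= Num.sqrt j%:R :> R by apply: sqrtr_ge0.
    have a0 : 0 <= Num.sqrt j%:R * d j by rewrite mulr_ge0.
    have h2 : j%:R * d j ^+ 2 <= dl ^+ 2.
      by rewrite -sj -exprMn !expr2; apply: ler_pM.
    have hj2 : m%:R <= 2 * j%:R :> R.
      by move: hj; rewrite -mul2n -(ler_nat R) natrM.
    have h3 : d j ^+ 2 <= 2 * dl ^+ 2 / m%:R.
      rewrite ler_pdivlMr // ; nra.
    rewrite /B -(ger0_norm (d0 j)) -sqrtr_sqr ler_sqrt //.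
    by rewrite divr_ge0 ?mulr_ge0 ?sqr_ge0 // ltW.
  have nearB : forall a b, (a <= b)%N -> (m <= a.*2)%N -> `|S x b - S x a| <= (b%:R - a%:R) * B.
    move=> a b ab ma. have := @tele x (fun j => j%:R * B) a b ab. rewrite -mulrBl. apply.
    move=> j aj jb. rewrite -mulrBl.
    have -> : j.+1%:R - j%:R = 1 :> R by rewrite -natr1; ring.
    rewrite mul1r; apply: le_trans (xd _) (dB _ _). lia.
  have main : `|S x k - S x m| <= `|k%:R - m%:R| * B.
    case: (leqP m k) => km.
    + rewrite (ger0_norm (_ : 0 <= k%:R - m%:R)); last by rewrite subr_ge0 ler_nat.
      apply: nearB => //; lia.
    + rewrite distrC (distrC (k%:R)) (ger0_norm (_ : 0 <= m%:R - k%:R)); last by rewrite subr_ge0 ler_nat ltnW.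
      by apply: nearB => //; exact: ltnW.
  set z := k%:R - m%:R. rewrite -/z in main z0.
  have az : `|z| ^+ 2 = z ^+ 2 by rewrite real_normK ?num_real.
  have az0 : 0 <= `|z| by [].
  have amgm : `|z| * B <= c1 * z ^+ 2 + dl.
    rewrite /c1 -az.
    have e1 : dl / (2 * m%:R) * `|z| ^+ 2 + dl = (dl ^+ 2 * `|z| ^+ 2 + m%:R * B ^+ 2 * m%:R) / (2 * m%:R * dl).
      rewrite BB. field. by rewrite gt_eqF // gt_eqF.
    rewrite e1 ler_pdivlMr; last by rewrite !mulr_gt0.
    have := sqr_ge0 (dl * `|z| - m%:R * B). nra.
  have : c2 * z ^+ 2 >= 0 by rewrite mulr_ge0.
  lra.
- have km : (k <= m)%N by lia.
  have := @tele x (fun j => 2 * K * Num.sqrt j%:R) k m km.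
  have sk0 : 0 <= Num.sqrt k%:R :> R by apply: sqrtr_ge0.
  have sm0 : 0 <= Num.sqrt m%:R :> R by apply: sqrtr_ge0.
  move=> /(_ _) h. have {h} h : `|S x m - S x k| <= 2 * K * Num.sqrt m%:R.
    apply: le_trans (h _) _; last by nra.
    move=> j _ _; apply: le_trans (xd _) _; apply: sqrt_step => //.
  rewrite distrC; apply: le_trans h _.
  set z := k%:R - m%:R.
  have hz : m%:R ^+ 2 <= 4 * z ^+ 2.
    have : m%:R < 2 * (m%:R - k%:R) :> R.
      by move: hk; rewrite -mul2n -(ltr_nat R) natrM => hh; lra.
    rewrite /z; nra.
  have h2 : 2 * K * Num.sqrt m%:R <= c2 * z ^+ 2.
    rewrite /c2 -mulrA mulrAC ler_pdivlMr; last by rewrite exprn_gt0.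
    have A0 : 0 <= K * Num.sqrt m%:R by rewrite mulr_ge0.
    have : K * Num.sqrt m%:R * (m%:R ^+ 2) <= K * Num.sqrt m%:R * (4 * z ^+ 2) by apply: ler_wpM2l.
    nra.
  have : c1 * z ^+ 2 >= 0 by rewrite mulr_ge0.
  lra.
Qed.

Lemma ev (f : nat -> R) : f @ \oo --> 0 -> forall e, 0 < e -> exists N, forall n, (N <= n)%N -> `|f n| < e.
Proof.
move=> H e he. move/cvgrPdist_lt: H => /(_ e he) [N _ HN]. exists N => n hn.
have := HN n hn. by rewrite sub0r normrN.
Qed.

Lemma core (p : R) (d e : nat -> R) : 0 < p -> (forall j, 0 <= d j) -> e @ \oo --> 0 ->
  (fun n => Num.sqrt n%:R * d n) @ \oo --> 0 ->
  forall eps, 0 < eps -> exists M, forall m, (M <= m)%N -> forall (x : nat -> R) (N : R),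
  (forall j, `|x j| <= d j) ->
  (forall n, `|((p + 1) ^+ n)^-1 * \sum_(k < n.+1) ('C(n, k)%:R * p ^+ (n - k)) * S x k - N| <= e n) ->
  `|S x m - N| <= eps.
Proof.
move=> p0 d0 he hd eps eps0.
set dl := eps / 4.
have dl0 : 0 < dl by rewrite /dl divr_gt0.
have [N1 HN1] := @ev e he dl dl0.
have [J HJ] := @ev _ hd dl dl0.
have hJ : forall j, (J <= j)%N -> Num.sqrt j%:R * d j <= dl.
  move=> j jJ; have := HJ j jJ. rewrite ger0_norm ?mulr_ge0 ?sqrtr_ge0 //. exact: ltW.
set K := dl + \sum_(j < J) Num.sqrt j%:R * d j.
have hpos : forall j, 0 <= Num.sqrt j%:R * d j by move=> j; rewrite mulr_ge0 ?sqrtr_ge0.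
have K0 : 0 <= K by apply: addr_ge0; [exact: ltW | apply: sumr_ge0 => j _; exact: hpos].
have hK : forall j, Num.sqrt j%:R * d j <= K.
  move=> j; case: (ltnP j J) => jJ.
  + rewrite /K (bigD1 (Ordinal jJ)) //= addrA; apply: le_trans (_ : dl + Num.sqrt j%:R * d j <= _).
      by rewrite lerDr ltW.
    by rewrite lerDl; apply: sumr_ge0 => i _; exact: hpos.
  + apply: le_trans (hJ j jJ) _; rewrite /K lerDl; apply: sumr_ge0 => i _; exact: hpos.
set T := 16 * K / dl.
exists (maxn (maxn 1 J.*2) (maxn N1 (Num.truncn (T ^+ 2)).+1)) => m hm x N xd hT.
have m1 : (1 <= m)%N by move: hm; rewrite !geq_max => /andP[/andP[]]. 
have mJ : (J.*2 <= m)%N by move: hm; rewrite !geq_max => /andP[/andP[]]. 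
have mN1 : (N1 <= m)%N by move: hm; rewrite !geq_max => /andP[_ /andP[]]. 
have mT : ((Num.truncn (T ^+ 2)).+1 <= m)%N by move: hm; rewrite !geq_max => /andP[_ /andP[]]. 
have mpos : 0 < m%:R :> R by rewrite ltr0n.
have Tm : T ^+ 2 < m%:R.
  have [_ h] := andP (truncn_itv (sqr_ge0 T)).
  by apply: lt_le_trans h _; rewrite ler_nat.
have sm0 : 0 <= Num.sqrt m%:R :> R by apply: sqrtr_ge0.
have smm : Num.sqrt m%:R * Num.sqrt m%:R = m%:R :> R by rewrite -expr2 sqr_sqrtr // ltW.
have Tsm : T <= Num.sqrt m%:R.
  apply: le_trans (ler_norm T) _; rewrite -sqrtr_sqr ler_sqrt ?ltW //.
set n := Num.truncn (m%:R * (p + 1)).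
have [hn1 hn2] : n%:R <= m%:R * (p + 1) /\ m%:R * (p + 1) < n.+1%:R.
  by apply/andP; apply: truncn_itv; rewrite mulr_ge0 // ?ltW // addr_gt0.
set q := (p + 1)^-1. set r := p * q.
have p10 : 0 < p + 1 by rewrite addr_gt0.
have qr : q + r = 1 by rewrite /r /q; field; rewrite gt_eqF.
have q0 : 0 < q by rewrite /q invr_gt0.
have q1 : q <= 1 by rewrite /q invr_le1 // ?unitfE ?gt_eqF //; lra.
have r0 : 0 <= r by rewrite /r mulr_ge0 // ltW.
have nq1 : n%:R * q <= m%:R.
  rewrite /q -(ler_pM2r p10) -mulrA mulVf ?gt_eqF // mulr1; exact: hn1.
have nq2 : m%:R < n%:R * q + q.
  have : m%:R < n.+1%:R * q.
    by rewrite /q ltr_pdivlMr.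
  by rewrite -natr1 mulrDl mul1r.
have mn : (N1 <= n)%N.
  apply: leq_trans mN1 _. rewrite -ltnS -(ltr_nat R); apply: le_lt_trans hn2.
  rewrite ler_peMr ?ler0n //; lra.
have eT : ((p + 1) ^+ n)^-1 * \sum_(k < n.+1) ('C(n, k)%:R * p ^+ (n - k)) * S x k =
    \sum_(k < n.+1) w q r n k * S x k.
  rewrite big_distrr /=; apply: eq_bigr => k _.
  have hq : q ^+ n = q ^+ k * q ^+ (n - k) by rewrite -exprD subnKC // -ltnS ltn_ord.
  rewrite /w /r exprMn -exprVn -/q hq; ring.
have h1 := hT n. rewrite eT in h1.
have h2 : `|e n| < dl := HN1 n mn.
have eqd : \sum_(k < n.+1) w q r n k * S x k - S x m = \sum_(k < n.+1) w q r n k * (S x k - S x m).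
  have := M0 qr n. move=> H0.
  rewrite -[X in _ - X]mul1r -H0 big_distrl -sumrB /=; apply: eq_bigr => k _; ring.
set c := dl / (2 * m%:R) + 8 * K * Num.sqrt m%:R / m%:R ^+ 2.
have wpos : forall k, 0 <= w q r n k.
  move=> k; rewrite /w; apply: mulr_ge0; [apply: mulr_ge0; [exact: ler0n| apply: exprn_ge0; exact: ltW]| exact: exprn_ge0].
have h3 : `|\sum_(k < n.+1) w q r n k * (S x k - S x m)| <=
   \sum_(k < n.+1) w q r n k * (dl + c * (k%:R - m%:R) ^+ 2).
  apply: le_trans (ler_norm_sum _ _ _) _; apply: ler_sum => i _.
  rewrite normrM (ger0_norm (wpos i)); apply: ler_wpM2l => //.
  exact: (@pw x d K dl J m i).
have h4 : \sum_(k < n.+1) w q r n k * (dl + c * (k%:R - m%:R) ^+ 2) =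
   dl + c * ((n%:R * q - m%:R) ^+ 2 + n%:R * q * r).
  rewrite -Mvar // -[X in X + _](mulr1 dl) -(M0 qr n) big_distrr big_distrr -big_split /=.
  by apply: eq_bigr => k _; ring.
rewrite h4 in h3.
have c1e : 2 * m%:R * (dl / (2 * m%:R)) = dl by field; rewrite gt_eqF.
have c2e : 2 * m%:R * (8 * K * Num.sqrt m%:R / m%:R ^+ 2) * Num.sqrt m%:R = 16 * K by
  (transitivity (16 * K * (Num.sqrt m%:R * Num.sqrt m%:R) / m%:R); first by field; rewrite gt_eqF);
  rewrite smm; field; rewrite gt_eqF.
have c2b : 2 * m%:R * (8 * K * Num.sqrt m%:R / m%:R ^+ 2) <= dl.
  have s0 : 0 < Num.sqrt m%:R :> R by rewrite sqrtr_gt0.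
  rewrite -(ler_pM2r s0) c2e.
  have -> : 16 * K = T * dl by rewrite /T; field; rewrite gt_eqF.
  rewrite mulrC; apply: ler_wpM2l; [exact: ltW | exact: Tsm].
have c0 : 0 <= c.
  rewrite /c addr_ge0 // divr_ge0 ?mulr_ge0 ?exprn_ge0 // ?ltW //.
have hv : (n%:R * q - m%:R) ^+ 2 + n%:R * q * r <= 1 + m%:R.
  have : n%:R * q * r <= n%:R * q.
    have r1 : r <= 1 by lra.
    by rewrite ler_piMr // mulr_ge0 // ltW.
  have a0 : 0 <= m%:R - n%:R * q by lra.
  have a1 : m%:R - n%:R * q <= 1 by lra.
  have := ler_pM a0 a0 a1 a1. rewrite mulr1 -expr2 -sqrrN opprB.
  lra.
have hc : c * ((n%:R * q - m%:R) ^+ 2 + n%:R * q * r) <= c * (1 + m%:R) by apply: ler_wpM2l.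
have hc2 : c * (1 + m%:R) <= 2 * m%:R * c.
  have : 1 <= m%:R :> R by rewrite ler1n.
  nra.
have hcc : 2 * m%:R * c <= dl + dl.
  rewrite /c mulrDr c1e; lra.
have etr : `|S x m - N| <= `|\sum_(k < n.+1) w q r n k * S x k - N| + `|\sum_(k < n.+1) w q r n k * S x k - S x m|.
  set A := \sum_(k < n.+1) w q r n k * S x k.
  have e0 : S x m - N = (A - N) - (A - S x m) by ring.
  rewrite e0; exact: ler_normB.
rewrite eqd in etr.
have hen : e n <= `|e n| by apply: ler_norm.
have edl : eps = 4 * dl by rewrite /dl; field.
rewrite edl. lra.
Qed.
End S.

Section F.
Variable R : realType.
Implicit Types (L U f g : R -> R).

Lemma nb (x : R) (B : set R) : nbhs x B -> exists e, 0 < e /\ forall y, `|x - y| < e -> B y.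
Proof. move=> /nbhs_ballP [e e0 H]. exists e; split => // y hy. Qed.
Lemma bn (x : R) e : 0 < e -> nbhs x (fun y => `|x - y| < e).
Proof. move=> e0. apply/nbhs_ballP. by exists e. Qed.
Lemma cb (A : set R) : compact A -> exists M, forall x, A x -> `|x| <= M.
Proof.
move=> /compact_bounded [M [_ HM]]. exists (M + 1) => x Ax.
apply: (HM (M + 1)). lra. exact Ax.
Qed.

Lemma inf_eq (S : set R) x : S x -> (forall y, S y -> x <= y) -> inf S = x.
Proof.
move=> Sx lb; apply/eqP; rewrite eq_le; apply/andP; split.
  by apply: (ge_inf _ Sx); exists x.
by apply: lb_le_inf => //; exists x.
Qed.
Lemma sup_eq (S : set R) x : S x -> (forall y, S y -> y <= x) -> sup S = x.
Proof.
move=> Sx ub; apply/eqP; rewrite eq_le; apply/andP; split.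
  by apply: ge_sup => //; exists x.
by apply: (ub_le_sup _ Sx); exists x.
Qed.

Definition inc01 f := forall a b, 0 <= a -> a <= b -> b <= 1 -> f a <= f b.
Definition lc01 f := forall a, 0 < a -> a <= 1 -> forall e, 0 < e ->
  exists b, [/\ 0 <= b, b < a & f a - e < f b].
Definition rc0 f := forall e, 0 < e -> exists b, [/\ 0 < b, b <= 1 & f b < f 0 + e].
Definition gf f := [/\ inc01 f, lc01 f & rc0 f].
Definition good L U := [/\ gf L, gf (fun a => - U a) & forall a, 0 <= a -> a <= 1 -> L a <= U a].
Definition nice (x : R -> R) := good (lo x) (hi x).

Lemma gf_ext f g : (forall a, 0 <= a -> a <= 1 -> f a = g a) -> gf f -> gf g.
Proof.
move=> E [hi hl hr]; split.
- move=> a b a0 ab b1; rewrite -!E //; [exact: hi| lra | lra].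
- move=> a a0 a1 e e0; have [b [b0 ba h]] := hl a a0 a1 e e0.
  exists b; split => //; rewrite -!E //; lra.
- move=> e e0; have [b [b0 b1 h]] := hr e e0.
  exists b; split => //; rewrite -!E //; lra.
Qed.

Lemma gfD f g : gf f -> gf g -> gf (fun a => f a + g a).
Proof.
move=> [fi fl fr] [gi gl gr]; split.
- move=> a b a0 ab b1; apply: lerD; [exact: fi | exact: gi].
- move=> a a0 a1 e e0.
  have e20 : 0 < e / 2 by rewrite divr_gt0.
  have [b1 [b10 b1a h1]] := fl a a0 a1 _ e20.
  have [b2 [b20 b2a h2]] := gl a a0 a1 _ e20.
  exists (Num.max b1 b2); split.
  + by rewrite le_max b10.
  + by rewrite gt_max b1a b2a.
  + have m1 : f b1 <= f (Num.max b1 b2) by apply: fi => //; rewrite ?le_max ?lexx //; apply: ltW; rewrite (lt_le_trans _ a1) // gt_max b1a b2a.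
    have m2 : g b2 <= g (Num.max b1 b2) by apply: gi => //; rewrite ?le_max ?lexx ?orbT //; apply: ltW; rewrite (lt_le_trans _ a1) // gt_max b1a b2a.
    have : e = e / 2 + e / 2 by field.
    lra.
- move=> e e0.
  have e20 : 0 < e / 2 by rewrite divr_gt0.
  have [b1 [b10 b11 h1]] := fr _ e20.
  have [b2 [b20 b21 h2]] := gr _ e20.
  exists (Num.min b1 b2); split.
  + by rewrite lt_min b10.
  + by rewrite ge_min b11.
  + have m1 : f (Num.min b1 b2) <= f b1 by apply: fi => //; rewrite ?ge_min ?lexx // le_min !ltW.
    have m2 : g (Num.min b1 b2) <= g b2 by apply: gi => //; rewrite ?ge_min ?lexx ?orbT // le_min !ltW.
    have : e = e / 2 + e / 2 by field.
    lra.
Qed.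

Lemma gf_const c : gf (fun _ => c).
Proof.
split.
- by move=> *.
- move=> a a0 a1 e e0; exists 0; split => //; lra.
- move=> e e0; exists 1; split => //; lra.
Qed.

Lemma gfZp k f : 0 < k -> gf f -> gf (fun a => k * f a).
Proof.
move=> k0 [fi fl fr]; split.
- move=> a b a0 ab b1; rewrite ler_pM2l //; exact: fi.
- move=> a a0 a1 e e0.
  have [b [b0 ba h]] := fl a a0 a1 (e / k) (divr_gt0 e0 k0).
  exists b; split => //.
  have : k * (f a - e / k) < k * f b by rewrite ltr_pM2l.
  by rewrite mulrBr mulrCA divff ?gt_eqF // mulr1.
- move=> e e0.
  have [b [b0 b1 h]] := fr (e / k) (divr_gt0 e0 k0).
  exists b; split => //.
  have : k * f b < k * (f 0 + e / k) by rewrite ltr_pM2l.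
  by rewrite mulrDr mulrCA divff ?gt_eqF // mulr1.
Qed.

Lemma gfZ k f : 0 <= k -> gf f -> gf (fun a => k * f a).
Proof.
move=> k0 gfF; case: (eqVneq k 0) => [->|kn0].
  by apply: gf_ext (gf_const 0) => a _ _; rewrite mul0r.
by apply: gfZp => //; rewrite lt_neqAle eq_sym kn0.
Qed.

Lemma good_ext L U L' U' : (forall a, 0 <= a -> a <= 1 -> L a = L' a /\ U a = U' a) ->
  good L U -> good L' U'.
Proof.
move=> E [gL gU LU]; split.
- by apply: gf_ext gL => a a0 a1; case: (E a a0 a1).
- by apply: gf_ext gU => a a0 a1; case: (E a a0 a1) => _ ->.
- move=> a a0 a1; case: (E a a0 a1) => <- <-; exact: LU.
Qed.

Section FL.
Variables L U : R -> R.
Hypothesis gLU : good L U.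
Let E t := [set 0] `|` [set a : R | 0 < a <= 1 /\ L a <= t <= U a].
Let f := from_levels L U.

Lemma E_ne t : E t !=set0. Proof. by exists 0; left. Qed.
Lemma E_ub t : forall y, E t y -> y <= 1.
Proof. by move=> y [->|[/andP[_ ->]]]. Qed.
Lemma E_hub t : has_ubound (E t). Proof. exists 1; exact: E_ub. Qed.
Lemma f_le1 t : f t <= 1. Proof. apply: ge_sup; [exact: E_ne | exact: E_ub]. Qed.

Lemma KL t a : 0 < a -> a <= 1 -> (a <= f t <-> L a <= t <= U a).
Proof.
have [[Li Ll Lr] [Ui Ul Ur] LU] := gLU.
move=> a0 a1; split; last first.
  move=> h; apply: (ub_le_sup (E_hub t)); right; split => //; by rewrite a0 a1.
move=> h.
have key : forall b, 0 <= b -> b < a -> L b <= t /\ t <= U b.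
  move=> b b0 ba.
  have [c Ec bc] := sup_gt (E_ne t) (lt_le_trans ba h).
  case: Ec => [c0|[/andP[c0 c1] /andP[h1 h2]]].
    by rewrite c0 in bc; lra.
  have := Li b c b0 (ltW bc) c1. have := Ui b c b0 (ltW bc) c1. lra.
apply/andP; split.
  apply/ler_addgt0Pr => e e0.
  have [b [b0 ba hb]] := Ll a a0 a1 e e0.
  have := key b b0 ba. lra.
apply/ler_addgt0Pr => e e0.
have [b [b0 ba hb]] := Ul a a0 a1 e e0.
have := key b b0 ba. lra.
Qed.

Lemma lo_fl a : 0 <= a -> a <= 1 -> lo f a = L a.
Proof.
have [[Li Ll Lr] [Ui Ul Ur] LU] := gLU.
move=> a0 a1; rewrite /lo /level.
case: (eqVneq a 0) => [->|an0].
- apply: inf_eq.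
  + move=> B /nb [e [e0 HB]].
    have [b [b0 b1 hb]] := Lr e e0.
    exists (L b); split.
      apply: (lt_le_trans b0); apply/(KL _ _ b0 b1); rewrite lexx LU //; exact: ltW.
    apply: HB; have := Li 0 b (lexx _) (ltW b0) b1. move=> h.
    rewrite ler0_norm; lra.
  + move=> y Hy; rewrite leNgt; apply/negP => hy.
    have hpos : 0 < L 0 - y by rewrite subr_gt0.
    have [s [As Bs]] := Hy _ (bn y _ hpos).
    have c1 := f_le1 s.
    have := (KL s _ As c1).1 (lexx _) => /andP[h1 h2].
    have := Li 0 (f s) (lexx _) (ltW As) c1.
    move: Bs; rewrite /= => Bs.
    have : s - y <= `|y - s| by rewrite distrC; apply: ler_norm.
    lra.
- have ap : 0 < a by rewrite lt_neqAle eq_sym an0 a0.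
  apply: inf_eq.
  + by apply/(KL _ _ ap a1); rewrite lexx LU.
  + by move=> y /(KL _ _ ap a1) /andP[].
Qed.

Lemma hi_fl a : 0 <= a -> a <= 1 -> hi f a = U a.
Proof.
have [[Li Ll Lr] [Ui Ul Ur] LU] := gLU.
move=> a0 a1; rewrite /hi /level.
case: (eqVneq a 0) => [->|an0].
- apply: sup_eq.
  + move=> B /nb [e [e0 HB]].
    have [b [b0 b1 hb]] := Ur e e0.
    exists (U b); split.
      apply: (lt_le_trans b0); apply/(KL _ _ b0 b1); rewrite lexx LU //; exact: ltW.
    apply: HB; have := Ui 0 b (lexx _) (ltW b0) b1. move=> h.
    rewrite ger0_norm; lra.
  + move=> y Hy; rewrite leNgt; apply/negP => hy.
    have hpos : 0 < y - U 0 by rewrite subr_gt0.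
    have [s [As Bs]] := Hy _ (bn y _ hpos).
    have c1 := f_le1 s.
    have := (KL s _ As c1).1 (lexx _) => /andP[h1 h2].
    have := Ui 0 (f s) (lexx _) (ltW As) c1.
    move: Bs; rewrite /= => Bs.
    have : y - s <= `|y - s| by apply: ler_norm.
    lra.
- have ap : 0 < a by rewrite lt_neqAle eq_sym an0 a0.
  apply: sup_eq.
  + by apply/(KL _ _ ap a1); rewrite lexx LU.
  + by move=> y /(KL _ _ ap a1) /andP[].
Qed.

Lemma nice_fl : nice f /\ forall a, 0 <= a -> a <= 1 -> lo f a = L a /\ hi f a = U a.
Proof.
have h : forall a, 0 <= a -> a <= 1 -> lo f a = L a /\ hi f a = U a.
  by move=> a a0 a1; rewrite lo_fl // hi_fl.
split => //; apply: good_ext gLU => a a0 a1; have [-> ->] := h a a0 a1; done.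
Qed.
End FL.

Definition Lv (v : R -> R) (b : R) := inf [set t | b <= v t].

Lemma lc_core (v : R -> R) (M : R) a e : (forall t, 0 <= v t) ->
  (forall t e, 0 < e -> \forall s \near t, v s < v t + e) ->
  (forall b, 0 < b -> b <= 1 -> exists t, b <= v t) ->
  (forall b t, 0 < b -> b <= 1 -> b <= v t -> - M <= t) ->
  0 < a -> a <= 1 -> 0 < e ->
  exists b, [/\ a / 2 <= b, b < a & Lv v a - e < Lv v b].
Proof.
move=> v0 usc ne lbd a0 a1 e0.
have hlb : forall b, 0 < b -> b <= 1 -> has_lbound [set t | b <= v t].
  by move=> b b0 b1; exists (- M) => t ht; exact: lbd ht.
have hne : forall b, 0 < b -> b <= 1 -> [set t | b <= v t] !=set0.
  by move=> b b0 b1; have [t ht] := ne b b0 b1; exists t.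
have mono : forall b c, 0 < b -> b <= c -> c <= 1 -> Lv v b <= Lv v c.
  move=> b c b0 bc c1; apply: lb_le_inf; first by apply: hne; lra.
  move=> t ht; apply: (ge_inf (hlb b b0 (le_trans bc c1))) => /=; exact: le_trans ht.
have a20 : 0 < a / 2 by rewrite divr_gt0.
have a2a : a / 2 < a by lra.
case: (pselect (exists b, [/\ a / 2 <= b, b < a & Lv v a - e < Lv v b])) => // nH.
exfalso.
have H : forall b, a / 2 <= b -> b < a -> Lv v b <= Lv v a - e.
  move=> b b1 b2; rewrite leNgt; apply/negP => h; apply: nH; exists b; split => //.
set Ls := [set x | exists2 b, a / 2 <= b /\ b < a & x = Lv v b].
have Lsne : Ls !=set0 by exists (Lv v (a / 2)); exists (a / 2) => //; split => //; rewrite lexx.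
have Lsub : forall x, Ls x -> x <= Lv v a - e by move=> x [b [b1 b2] ->]; exact: H.
have Lshs : has_sup Ls by split => //; exists (Lv v a - e).
set l := sup Ls.
have hl : l <= Lv v a - e by apply: ge_sup.
have val : a <= v l.
  rewrite leNgt; apply/negP => vl.
  set eta := (a - v l) / 2.
  have eta0 : 0 < eta by rewrite divr_gt0 // subr_gt0.
  have [dl [dl0 Hdl]] := nb _ _ (usc l eta eta0).
  have dl20 : 0 < dl / 2 by rewrite divr_gt0.
  have [x [b0 [b01 b02] ->] hx] := sup_adherent dl20 Lshs.
  set b := Num.max b0 (a - eta).
  have bb0 : b0 <= b by rewrite le_max lexx.
  have bae : a - eta <= b by rewrite le_max lexx orbT.
  have ba : b < a by rewrite gt_max b02 /=; lra.
  have b0p : 0 < b0 by lra.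
  have bp : 0 < b by lra.
  have b1 : b <= 1 by lra.
  have m1 : Lv v b0 <= Lv v b by apply: mono.
  have m2 : Lv v b <= l.
    apply: (ub_le_sup _ (_ : Ls (Lv v b))); first by exists (Lv v a - e).
    exists b => //; split => //; lra.
  have [t ht1 ht2] := inf_adherent dl20 (conj (hne b bp b1) (hlb b bp b1)).
  have ht3 : Lv v b <= t by apply: (ge_inf (hlb b bp b1)).
  have : `|l - t| < dl.
    have hx' : l - dl / 2 < Lv v b0 := hx.
    rewrite /Lv in ht2 ht3 m1 m2 hx'.
    rewrite ltr_norml; apply/andP; split; lra.
  move=> /Hdl /= hv.
  have : b <= v t := ht1.
  rewrite /eta in hv bae; lra.
have : Lv v a <= l by apply: (ge_inf (hlb a a0 a1)).
lra.
Qed.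

Lemma fuzzy_nice u : is_fuzzy u -> nice u.
Proof.
case=> h01 [t1 ht1] _ husc hcomp.
set Supp := closure [set t | 0 < u t].
have [M HM] := cb _ hcomp.
have hM : forall t, Supp t -> - M <= t /\ t <= M.
  by move=> t /HM; rewrite ler_norml => /andP[].
have u0 : forall t, 0 <= u t by move=> t; case/andP: (h01 t).
have u1 : forall t, u t <= 1 by move=> t; case/andP: (h01 t).
have lsub : forall a, 0 <= a -> level u a `<=` Supp.
  move=> a a0 t; rewrite /level; case: eqP => [_ //|an0] /= ht.
  apply: subset_closure => /=; apply: lt_le_trans ht.
  by rewrite lt_neqAle eq_sym a0 andbT; apply/eqP.
have lt1 : forall a, 0 <= a -> a <= 1 -> level u a t1.
  move=> a a0 a1; rewrite /level; case: eqP => [_|an0] /=.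
    by apply: subset_closure => /=; rewrite ht1.
  by rewrite ht1.
have hlb : forall a, 0 <= a -> has_lbound (level u a).
  by move=> a a0; exists (- M) => t /(lsub a a0) /hM [].
have hub : forall a, 0 <= a -> has_ubound (level u a).
  by move=> a a0; exists M => t /(lsub a a0) /hM [].
have mono : forall a b, 0 <= a -> a <= b -> b <= 1 -> level u b `<=` level u a.
  move=> a b a0 ab b1 t; rewrite {2}/level; case: eqP => [_|an0] ht.
    by apply: (lsub b) => //; apply: le_trans ab.
  move: ht; rewrite /level; case: eqP => [b0|bn0] /= ht.
    by exfalso; apply: an0; apply/eqP; rewrite eq_le a0 -b0 ab.
  exact: le_trans ab ht.
have levE : forall a, a != 0 -> level u a = [set t | a <= u t].
  by move=> a an0; rewrite /level (negbTE an0).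
have lo_mono : forall a b, 0 <= a -> a <= b -> b <= 1 -> lo u a <= lo u b.
  move=> a b a0 ab b1; apply: lb_le_inf.
    exists t1; apply: lt1 => //; exact: le_trans ab.
  by move=> t ht; apply: (ge_inf (hlb a a0)); exact: (mono a b).
have hi_mono : forall a b, 0 <= a -> a <= b -> b <= 1 -> hi u b <= hi u a.
  move=> a b a0 ab b1; apply: ge_sup.
    exists t1; apply: lt1 => //; exact: le_trans ab.
  by move=> t ht; apply: (ub_le_sup (hub a a0)); exact: (mono a b).
have lohi : forall a, 0 <= a -> a <= 1 -> lo u a <= hi u a.
  move=> a a0 a1; apply: (@le_trans _ _ t1).
    exact: (ge_inf (hlb a a0) (lt1 a a0 a1)).
  exact: (ub_le_sup (hub a a0) (lt1 a a0 a1)).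
have ne : forall b, 0 < b -> b <= 1 -> exists t, b <= u t.
  by move=> b b0 b1; exists t1; rewrite ht1.
have lbd : forall b t, 0 < b -> b <= 1 -> b <= u t -> - M <= t.
  move=> b t b0 b1 ht; have := lsub b (ltW b0) t; rewrite levE ?gt_eqF // => /(_ ht) /hM [] //.
set v := fun t => u (- t).
have LvE : forall b, b != 0 -> Lv v b = - hi u b.
  move=> b bn0; rewrite /Lv /inf /hi levE //; congr (- sup _).
  apply/seteqP; split => x /=.
    by move=> [y hy <-].
  move=> hx; exists (- x); rewrite /v /= ?opprK //.
have uscv : forall t e, 0 < e -> \forall s \near t, v s < v t + e.
  move=> t e e0; have [dl [dl0 H]] := nb _ _ (husc (- t) e e0).
  apply/nbhs_ballP; exists dl => // s /= hs; apply: H.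
  by rewrite -normrN opprD !opprK.
have lbdv : forall b t, 0 < b -> b <= 1 -> b <= v t -> - M <= t.
  move=> b t b0 b1 ht; have := lsub b (ltW b0) (- t); rewrite levE ?gt_eqF // => /(_ ht) /hM [] _.
  by rewrite lerNl.
have hlbS : has_lbound Supp by exists (- M) => t /hM [].
have hubS : has_ubound Supp by exists M => t /hM [].
have Sne : Supp !=set0 by exists t1; have := lt1 0 (lexx _) ler01; rewrite /level eqxx.
split; [split|split|].
- move=> a b a0 ab b1; exact: lo_mono.
- move=> a a0 a1 e e0.
  have [b [b1 b2 hb]] := @lc_core u M a e u0 husc ne lbd a0 a1 e0.
  have bp : 0 < b by apply: lt_le_trans b1; rewrite divr_gt0.
  exists b; split => //; first exact: ltW.
  by move: hb; rewrite /Lv /lo !levE // gt_eqF.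
- move=> e e0.
  have e20 : 0 < e / 2 by rewrite divr_gt0.
  have [t St ht] := inf_adherent e20 (conj Sne hlbS).
  have [s [As Bs]] := St _ (bn t _ e20).
  exists (u s); split => //.
  have hs : level u (u s) s by rewrite levE ?gt_eqF //=.
  have h1 : lo u (u s) <= s by exact: (ge_inf (hlb _ (ltW As)) hs).
  move: Bs => /= Bs.
  have h2 : s - t <= `|t - s| by rewrite distrC; apply: ler_norm.
  have h3 : e = e / 2 + e / 2 by field.
  have h4 : lo u 0 = inf Supp by rewrite /lo /level eqxx.
  lra.
- move=> a b a0 ab b1 /=; rewrite lerN2; exact: hi_mono.
- move=> a a0 a1 e e0.
  have v0 : forall t, 0 <= v t by move=> t; exact: u0.
  have nev : forall b, 0 < b -> b <= 1 -> exists t, b <= v t.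
    by move=> b b0 b1'; exists (- t1); rewrite /v opprK ht1.
  have [b [b1 b2 hb]] := @lc_core v M a e v0 uscv nev lbdv a0 a1 e0.
  have bp : 0 < b by apply: lt_le_trans b1; rewrite divr_gt0.
  exists b; split => //; first exact: ltW.
  by move: hb; rewrite !LvE // gt_eqF.
- move=> e e0.
  have e20 : 0 < e / 2 by rewrite divr_gt0.
  have [t St ht] := sup_adherent e20 (conj Sne hubS).
  have [s [As Bs]] := St _ (bn t _ e20).
  exists (u s); split => //.
  have hs : level u (u s) s by rewrite levE ?gt_eqF //=.
  have h1 : s <= hi u (u s) by exact: (ub_le_sup (hub _ (ltW As)) hs).
  move: Bs => /= Bs.
  have h2 : t - s <= `|t - s| by apply: ler_norm.
  have h3 : e = e / 2 + e / 2 by field.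
  have h4 : hi u 0 = sup Supp by rewrite /hi /level eqxx.
  lra.
- exact: lohi.
Qed.

Lemma nice_bound x a : nice x -> 0 <= a -> a <= 1 ->
  `|lo x a| <= `|lo x 0| + `|hi x 0| /\ `|hi x a| <= `|lo x 0| + `|hi x 0|.
Proof.
move=> [[Li _ _] [Ui _ _] LU] a0 a1.
have h1 := Li 0 a (lexx _) a0 a1. have h2 := Ui 0 a (lexx _) a0 a1.
have h3 := LU a a0 a1. rewrite /= in h2.
have A1 := ler_norm (lo x 0). have A2 := ler_norm (hi x 0).
have A3 : - `|lo x 0| <= lo x 0 by rewrite lerNl -normrN ler_norm.
have A4 : - `|hi x 0| <= hi x 0 by rewrite lerNl -normrN ler_norm.
rewrite !ler_norml; split; apply/andP; split; lra.
Qed.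

Let Dset (x y : R -> R) := [set z : R | exists a : R, 0 <= a <= 1 /\
       z = Num.max `|lo x a - lo y a| `|hi x a - hi y a|].

Lemma fdist_ge x y a : nice x -> nice y -> 0 <= a -> a <= 1 ->
  `|lo x a - lo y a| <= fdist x y /\ `|hi x a - hi y a| <= fdist x y.
Proof.
move=> nx ny a0 a1.
have hub : has_ubound (Dset x y).
  exists ((`|lo x 0| + `|hi x 0|) + (`|lo y 0| + `|hi y 0|)) => z [b [/andP[b0 b1] ->]].
  have [h1 h2] := nice_bound _ _ nx b0 b1. have [h3 h4] := nice_bound _ _ ny b0 b1.
  rewrite ge_max; apply/andP; split; apply: (le_trans (ler_normB _ _)); exact: lerD.
have hz := ub_le_sup hub (_ : Dset x y (Num.max `|lo x a - lo y a| `|hi x a - hi y a|)).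
have : Dset x y (Num.max `|lo x a - lo y a| `|hi x a - hi y a|) by exists a; rewrite a0 a1.
move=> /hz h; rewrite /fdist; split; apply: le_trans h; rewrite le_max lexx ?orbT //.
Qed.

Lemma fdist_le (x y : R -> R) (eps : R) : (forall a, 0 <= a -> a <= 1 ->
  `|lo x a - lo y a| <= eps /\ `|hi x a - hi y a| <= eps) -> fdist x y <= eps.
Proof.
move=> H; apply: ge_sup.
  by exists (Num.max `|lo x 0 - lo y 0| `|hi x 0 - hi y 0|); exists 0; rewrite lexx ler01.
move=> z [a [/andP[a0 a1] ->]]; have [h1 h2] := H a a0 a1; by rewrite ge_max h1 h2.
Qed.

Lemma fdist_ge0 x y : nice x -> nice y -> 0 <= fdist x y.
Proof. move=> nx ny; have [h _] := fdist_ge _ _ _ nx ny (lexx 0) ler01; exact: le_trans h. Qed.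

Lemma fzeroE : @fzero R = from_levels (fun _ : R => 0) (fun _ => 0).
Proof.
apply: funext => t; rewrite /fzero /from_levels; case: eqP => [->|tn0].
- apply/esym/sup_eq; first by right; split; rewrite /= ?ltr01 ?lexx.
  by move=> y [->|[/andP[_ ->]]] //; rewrite ler01.
- apply/esym/sup_eq; first by left.
  move=> y [->|[_ /andP[h1 h2]]] //.
  by exfalso; apply: tn0; apply/eqP; rewrite eq_le h1 h2.
Qed.

Lemma good0 : good (fun _ : R => 0) (fun _ => 0).
Proof. split; [exact: gf_const | exact: gf_const | by move=> *]. Qed.

Lemma nice_fzero : nice (@fzero R) /\ forall a, 0 <= a -> a <= 1 -> lo (@fzero R) a = 0 /\ hi (@fzero R) a = 0.
Proof. rewrite fzeroE; exact: nice_fl good0. Qed.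

Lemma nice_fadd x y : nice x -> nice y -> nice (fadd x y) /\ forall a, 0 <= a -> a <= 1 ->
  lo (fadd x y) a = lo x a + lo y a /\ hi (fadd x y) a = hi x a + hi y a.
Proof.
move=> [gLx gUx LUx] [gLy gUy LUy]; apply: nice_fl; split.
- exact: gfD.
- apply: gf_ext (gfD _ _ gUx gUy) => a _ _ /=; ring.
- move=> a a0 a1; apply: lerD; [exact: LUx | exact: LUy].
Qed.

Lemma nice_fscale k x : 0 <= k -> nice x -> nice (fscale k x) /\ forall a, 0 <= a -> a <= 1 ->
  lo (fscale k x) a = k * lo x a /\ hi (fscale k x) a = k * hi x a.
Proof.
move=> k0 [gL gU LU].
have E : forall a, 0 <= a -> a <= 1 -> Num.min (k * lo x a) (k * hi x a) = k * lo x a /\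
   Num.max (k * lo x a) (k * hi x a) = k * hi x a.
  move=> a a0 a1; have h : k * lo x a <= k * hi x a by rewrite ler_wpM2l // LU.
  by split; [apply/min_idPl | apply/max_idPr].
have g : good (fun a => Num.min (k * lo x a) (k * hi x a)) (fun a => Num.max (k * lo x a) (k * hi x a)).
  apply: (@good_ext (fun a => k * lo x a) (fun a => k * hi x a)).
    by move=> a a0 a1; have [-> ->] := E a a0 a1.
  split.
  - exact: gfZ.
  - apply: gf_ext (gfZ _ _ k0 gU) => a _ _ /=; ring.
  - move=> a a0 a1; rewrite ler_wpM2l //; exact: LU.
have [n h] := nice_fl _ _ g; split => // a a0 a1.
have [-> ->] := h a a0 a1; exact: E.
Qed.

Lemma nice_fsum (F : nat -> R -> R) n : (forall i, nice (F i)) ->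
  nice (fsum F n) /\ forall a, 0 <= a -> a <= 1 ->
  lo (fsum F n) a = \sum_(i < n.+1) lo (F i) a /\ hi (fsum F n) a = \sum_(i < n.+1) hi (F i) a.
Proof.
move=> nF; elim: n => [|n [nS hS]].
  by split; [exact: (nF 0%N) | move=> a _ _; rewrite !big_ord1].
have [nA hA] := nice_fadd _ _ nS (nF n.+1).
split => // a a0 a1 /=; have [-> ->] := hA a a0 a1; have [-> ->] := hS a a0 a1.
by rewrite !(big_ord_recr n.+1).
Qed.
End F.


Arguments S {R}.
Arguments nice {R}.
Arguments good {R}.
Arguments gf {R}.
Arguments nice_fscale {R k x}.
Arguments nice_fsum {R F}.
Arguments fdist_ge {R}.
Arguments fdist_ge0 {R x y}.
Arguments fdist_le {R}.
Arguments core {R p d e}.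

Theorem mainTheorem5 (R : realType) (p : R) (u : nat -> R -> R) (nu : R -> R) :
  0 < p ->
  (forall n, is_fuzzy (u n)) ->
  is_fuzzy nu ->
  (fun n => fdist (euler_mean p u n) nu) @ \oo --> 0 ->
  (fun n => Num.sqrt (n%:R) * fdist (u n) (@fzero R)) @ \oo --> 0 ->
  (fun n => fdist (partial_sum u n) nu) @ \oo --> 0.
Proof.
move=> p0 fu fnu he hd.
have nU : forall n, nice (u n) by move=> n; apply: fuzzy_nice.
have nN : nice nu by apply: fuzzy_nice.
have [nZ hZ] := nice_fzero R.
have nP : forall n, nice (partial_sum u n) /\ forall a, 0 <= a -> a <= 1 ->
    lo (partial_sum u n) a = S (fun j => lo (u j) a) n /\ hi (partial_sum u n) a = S (fun j => hi (u j) a) n.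
  by move=> n; exact: nice_fsum.
have p10 : 0 < p + 1 by rewrite addr_gt0.
have nE : forall n, nice (euler_mean p u n) /\ forall a, 0 <= a -> a <= 1 ->
    lo (euler_mean p u n) a = ((p + 1) ^+ n)^-1 * (\sum_(k < n.+1) ('C(n, k)%:R * p ^+ (n - k)) * S (fun j => lo (u j) a) k) /\
    hi (euler_mean p u n) a = ((p + 1) ^+ n)^-1 * (\sum_(k < n.+1) ('C(n, k)%:R * p ^+ (n - k)) * S (fun j => hi (u j) a) k).
  move=> n.
  have cpos : forall k, 0 <= 'C(n, k)%:R * p ^+ (n - k) by move=> k; rewrite mulr_ge0 ?exprn_ge0 // ltW.
  have nF : forall k, nice (fscale ('C(n, k)%:R * p ^+ (n - k)) (partial_sum u k)).
    by move=> k; have [] := nice_fscale (cpos k) (nP k).1.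
  have [nS hS] := nice_fsum n nF.
  have q0 : 0 <= ((p + 1) ^+ n)^-1 by rewrite invr_ge0 exprn_ge0 // ltW.
  have [nT hT] := nice_fscale q0 nS.
  split => // a a0 a1.
  rewrite /euler_mean; have [-> ->] := hT a a0 a1; have [-> ->] := hS a a0 a1.
  split; congr (_ * _); apply: eq_bigr => k _.
    have [_ h] := nice_fscale (cpos k) (nP k).1; have [-> _] := h a a0 a1.
    by have [_ h2] := nP k; have [-> _] := h2 a a0 a1.
  have [_ h] := nice_fscale (cpos k) (nP k).1; have [_ ->] := h a a0 a1.
  by have [_ h2] := nP k; have [_ ->] := h2 a a0 a1.
have d0 : forall j, 0 <= fdist (u j) (@fzero R) by move=> j; exact: fdist_ge0.
apply/cvgrPdist_le => eps eps0.
have [M HM] := core p0 d0 he hd _ eps0.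
exists M => // m hm.
rewrite sub0r normrN ger0_norm; last by apply: fdist_ge0 => //; exact: (nP m).1.
apply: fdist_le => a a0 a1.
have [_ hPm] := nP m; have [-> ->] := hPm a a0 a1.
split.
- apply: (HM m hm (fun j => lo (u j) a)).
  + move=> j; have [h _] := fdist_ge _ _ _ (nU j) nZ a0 a1.
    by have [hz _] := hZ a a0 a1; rewrite hz subr0 in h.
  + move=> n; have [h _] := fdist_ge _ _ _ (nE n).1 nN a0 a1.
    by have [_ hh] := nE n; have [hh1 _] := hh a a0 a1; rewrite hh1 in h.
- apply: (HM m hm (fun j => hi (u j) a)).
  + move=> j; have [_ h] := fdist_ge _ _ _ (nU j) nZ a0 a1.
    by have [_ hz] := hZ a a0 a1; rewrite hz subr0 in h.
  + move=> n; have [_ h] := fdist_ge _ _ _ (nE n).1 nN a0 a1.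
    by have [_ hh] := nE n; have [_ hh1] := hh a a0 a1; rewrite hh1 in h.
Qed.
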